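(* Assume Case 4 holds and let $\mathcal{I}_f^{AR}=[l_1,l_1+l_2]$. Then for every $n\ge1$, $Q^n$ contains the term $z^{\gamma_n}w^{d^n}$, $(\gamma_n,d^n)$ is a vertex of $N(Q^n)$, and for every $l\in\mathcal{I}_f^{AR}$, $$w_l(Q^n)=w_l(z^{\gamma_n}w^{d^n})=\gamma_n+l\,d^n.$$
   Context: Let $f(z,w)=(p(z),q(z,w))$ be a holomorphic skew product germ at the origin of $\mathbb{C}^2$ with $f(0,0)=(0,0)$, where $p(z)=a_\delta z^\delta+O(z^{\delta+1})$ with $a_\delta\neq0$ and integer $\delta\ge1$, and $q(z,w)=\sum_{i+j\ge1}b_{ij}z^iw^j$ is not identically zero. For $n\ge1$ write $f^n=(p^n,Q^n)$. For a nonzero germ $g=\sum g_{ij}z^iw^j$, say $g$ contains $z^aw^b$ if $g_{ab}\neq0$, and for real $l>0$ let $w_l(g)=\min\{i+lj: g_{ij}\neq0\}$. The Newton polygon $N(g)$ is the convex hull of $\bigcup_{g_{ij}\neq0}\{(x,y):x\ge i,\ y\ge j\}$. Let $(n_1,m_1),\dots,(n_s,m_s)$ be the vertices of $N(q)$ with $n_1<\cdots<n_s$, $m_1>\cdots>m_s$; for $1\le k\le s-1$ let $T_k$ be the $y$-intercept of the line through $(n_k,m_k)$ and $(n_{k+1},m_{k+1})$. Case 4 means: $s>2$ and $T_k\le\delta\le T_{k-1}$ for some $2\le k\le s-1$; for this $k$ set $(\gamma,d)=(n_k,m_k)$, $l_1=\frac{n_k-n_{k-1}}{m_{k-1}-m_k}$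 and $l_2$ defined by $l_1+l_2=\frac{n_{k+1}-n_k}{m_k-m_{k+1}}$. Define $\gamma_n=\gamma(\delta^{n-1}+\delta^{n-2}d+\cdots+d^{n-1})$. *)

(* Defs.v *)
From HB Require Import structures.
From mathcomp Require Import all_boot all_order all_algebra.
From mathcomp Require Import reals complex.
Set Implicit Arguments.
Unset Strict Implicit.
Unset Printing Implicit Defensive.
Import Order.TTheory GRing.Theory Num.Theory.
Local Open Scope ring_scope.

Section Series.
Variable R : realType.
Local Notation C := R[i].

(* a germ g = sum_{i,j} g i j z^i w^j *)
Definition series := nat -> nat -> C.

(* holomorphic germ at the origin = convergent power series *)
Definition convergent (g : series) : Prop :=
  exists r : R, 0 < r /\ exists M : R,
    forall i j, Normc.normc (g i j) * r ^+ (i + j) <= M.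

Definition convergent1 (p : nat -> C) : Prop :=
  exists r : R, 0 < r /\ exists M : R,
    forall i, Normc.normc (p i) * r ^+ i <= M.

Definition sone : series := fun i j => ((i == 0%N) && (j == 0%N))%:R.
Definition sZ : series := fun i j => ((i == 1%N) && (j == 0%N))%:R.
Definition sW : series := fun i j => ((i == 0%N) && (j == 1%N))%:R.

Definition monomial (a b : nat) : series :=
  fun i j => ((i == a) && (j == b))%:R.

Definition smul (f g : series) : series :=
  fun a b => \sum_(i < a.+1) \sum_(j < b.+1) f i j * g (a - i)%N (b - j)%N.

Fixpoint spow (f : series) (n : nat) : series :=
  if n is n'.+1 then smul f (spow f n') else sone.

(* composition g(P(z,w), Q(z,w)), for P, Q without constant term
   (only the terms with i + j <= a + b can contribute to z^a w^b) *)
Definition scomp (g P Q : series) : series :=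
  fun a b => \sum_(i < (a + b).+1) \sum_(j < (a + b).+1)
               g i j * smul (spow P i) (spow Q j) a b.

Definition lift1 (p : nat -> C) : series :=
  fun i j => if j == 0%N then p i else 0.

(* f^n = (p^n, Q^n) for the skew product f(z,w) = (p(z), q(z,w)):
   f^0 = id, f^(n+1) = f o f^n *)
Fixpoint skew_iter (p : nat -> C) (q : series) (n : nat) : series * series :=
  if n is n'.+1 then
    let PQ := skew_iter p q n' in
    (scomp (lift1 p) PQ.1 PQ.2, scomp q PQ.1 PQ.2)
  else (sZ, sW).

Definition contains (g : series) (a b : nat) : Prop := g a b != 0.

Definition wl_eq (g : series) (l v : R) : Prop :=
  (exists i j, g i j != 0 /\ i%:R + l * j%:R = v) /\
  (forall i j, g i j != 0 -> v <= i%:R + l * j%:R).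

(* Newton polygon: convex hull of the union of the quadrants
   {x >= i, y >= j} over the support of g *)
Definition in_quadrants (g : series) (x : R * R) : Prop :=
  exists i j, g i j != 0 /\ i%:R <= x.1 /\ j%:R <= x.2.

Definition newton_polygon (g : series) (x : R * R) : Prop :=
  exists (n : nat) (pts : 'I_n -> R * R) (lam : 'I_n -> R),
    (forall k, in_quadrants g (pts k)) /\ (forall k, 0 <= lam k) /\
    \sum_(k < n) lam k = 1 /\
    x = (\sum_(k < n) lam k * (pts k).1, \sum_(k < n) lam k * (pts k).2).

Definition is_vertex (g : series) (v : R * R) : Prop :=
  newton_polygon g v /\
  forall a b : R * R, forall t : R,
    newton_polygon g a -> newton_polygon g b -> 0 < t < 1 ->
    v = (t * a.1 + (1 - t) * b.1, t * a.2 + (1 - t) * b.2) ->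
    a = v /\ b = v.

Definition y_intercept (x1 y1 x2 y2 : R) : R :=
  y1 - x1 * (y2 - y1) / (x2 - x1).

End Series.

(* Main.v *)
Require Import Defs.
From HB Require Import structures.
From mathcomp Require Import all_boot all_order all_algebra.
From mathcomp Require Import reals complex.
From mathcomp Require Import ring lra zify.
Import Order.TTheory GRing.Theory Num.Theory.
Local Open Scope ring_scope.
Set Implicit Arguments.
Unset Strict Implicit.

Definition psi {R : realType} (L : R) (a b : nat) : R := a%:R + L * b%:R.

Definition Kin {R : realType} (L1 L2 : R) (x y a b : nat) : Prop :=
  psi L1 a b <= psi L1 x y /\ psi L2 a b <= psi L2 x y.

Definition suppK {R : realType} (L1 L2 : R) (f : series R) (a b : nat) : Prop :=
  forall x y, f x y != 0 -> Kin L1 L2 x y a b.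

Lemma psiD {R : realType} (L : R) a b c e :
  psi L (a + c)%N (b + e)%N = psi L a b + psi L c e.
Proof. rewrite /psi !natrD; ring. Qed.

Lemma Kin_refl {R : realType} (L1 L2 : R) a b : Kin L1 L2 a b a b.
Proof. by split. Qed.

Lemma Kin_trans {R : realType} (L1 L2 : R) x y a b c e :
  Kin L1 L2 x y a b -> Kin L1 L2 a b c e -> Kin L1 L2 x y c e.
Proof. move=> [h1 h2] [h3 h4]; split; [exact: le_trans h3 h1|exact: le_trans h4 h2]. Qed.

Lemma Kin_add {R : realType} (L1 L2 : R) x1 y1 a1 b1 x2 y2 a2 b2 :
  Kin L1 L2 x1 y1 a1 b1 -> Kin L1 L2 x2 y2 a2 b2 ->
  Kin L1 L2 (x1 + x2)%N (y1 + y2)%N (a1 + a2)%N (b1 + b2)%N.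
Proof. move=> [h1 h2] [h3 h4]; rewrite /Kin !psiD; split; exact: lerD. Qed.

Lemma natr_inj {R : realType} {m n : nat} : (m%:R : R) = n%:R -> m = n.
Proof. by move/eqP; rewrite eqr_nat => /eqP. Qed.

Lemma Kin_antisym {R : realType} (L1 L2 : R) x y a b : L1 != L2 ->
  Kin L1 L2 x y a b -> Kin L1 L2 a b x y -> x = a /\ y = b.
Proof.
move=> hL [h1 h2] [h3 h4].
have e1 : psi L1 x y = psi L1 a b by apply/le_anti; rewrite h1 h3.
have e2 : psi L2 x y = psi L2 a b by apply/le_anti; rewrite h2 h4.
move: e1 e2; rewrite /psi => e1 e2.
have ey : (y%:R : R) = b%:R.
  have : (L1 - L2) * (y%:R - b%:R) = 0.
    transitivity ((x%:R + L1 * y%:R - (a%:R + L1 * b%:R)) - (x%:R + L2 * y%:R - (a%:R + L2 * b%:R))); first by ring.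
    by rewrite e1 e2 !subrr.
  move/eqP; rewrite mulf_eq0 subr_eq0 (negbTE hL) /= subr_eq0 => /eqP //.
split; last exact: (natr_inj ey).
apply: (natr_inj (R:=R)); move: e1; rewrite ey => /(congr1 (fun t => t - L1 * b%:R)); rewrite !addrK; done.
Qed.

Lemma Kin_split {R : realType} (L1 L2 : R) x1 y1 a1 b1 x2 y2 a2 b2 : L1 != L2 ->
  Kin L1 L2 x1 y1 a1 b1 -> Kin L1 L2 x2 y2 a2 b2 ->
  (x1 + x2 = a1 + a2)%N -> (y1 + y2 = b1 + b2)%N -> x1 = a1 /\ y1 = b1.
Proof.
move=> hL [h1 h2] [h3 h4] ex ey; apply: (@Kin_antisym _ L1 L2 _ _ _ _ hL); first by split.
have := psiD L1 x1 y1 x2 y2; have := psiD L2 x1 y1 x2 y2.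
have := psiD L1 a1 b1 a2 b2; have := psiD L2 a1 b1 a2 b2.
rewrite ex ey => f1 f2 f3 f4; rewrite /Kin; split; lra.
Qed.

Lemma sum2_nz {V : zmodType} m n (F : nat -> nat -> V) :
  \sum_(i < m) \sum_(j < n) F i j != 0 ->
  exists i j, (i < m)%N /\ (j < n)%N /\ F i j != 0.
Proof.
move=> H.
have [/existsP [i /existsP [j hij]]|hn] :=
  boolP [exists i : 'I_m, exists j : 'I_n, F i j != 0].
  by exists i, j; rewrite !ltn_ord.
move: H; rewrite (big1 _ _ (fun i : 'I_m => \sum_(j < n) F i j)) ?eqxx // => i _; rewrite big1 // => j _.
apply/eqP; apply: contraNT hn => hj; apply/existsP; exists i; apply/existsP; by exists j.
Qed.

Lemma sum2_single {V : zmodType} m n (F : nat -> nat -> V) i0 j0 :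
  (i0 < m)%N -> (j0 < n)%N ->
  (forall i j, (i < m)%N -> (j < n)%N -> (i != i0) || (j != j0) -> F i j = 0) ->
  \sum_(i < m) \sum_(j < n) F i j = F i0 j0.
Proof.
move=> hi hj H.
rewrite (bigD1 (Ordinal hi)) //=.
rewrite [X in _ + X = _]big1 ?addr0; last first.
  move=> i hii; rewrite big1 // => j _; apply: H; rewrite ?ltn_ord //.
  by rewrite -val_eqE /= in hii; rewrite hii.
rewrite (bigD1 (Ordinal hj)) //=.
rewrite [X in _ + X = _]big1 ?addr0 // => j hjj; apply: H => //.
by rewrite -val_eqE /= in hjj; rewrite hjj orbT.
Qed.

Lemma smul_supp {R : realType} (L1 L2 : R) (f g : series R) a1 b1 a2 b2 :
  suppK L1 L2 f a1 b1 -> suppK L1 L2 g a2 b2 ->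
  suppK L1 L2 (smul f g) (a1 + a2)%N (b1 + b2)%N.
Proof.
move=> hf hg x y; rewrite /smul => /(@sum2_nz _ _ _ (fun i j => f i j * g (x - i)%N (y - j)%N)) [i [j [hi [hj]]]]; rewrite mulf_eq0 negb_or => /andP [fn gn].
have := Kin_add (hf _ _ fn) (hg _ _ gn).
by rewrite !subnKC // -ltnS.
Qed.

Lemma smul_corner {R : realType} (L1 L2 : R) (f g : series R) a1 b1 a2 b2 :
  L1 != L2 -> suppK L1 L2 f a1 b1 -> suppK L1 L2 g a2 b2 ->
  smul f g (a1 + a2)%N (b1 + b2)%N = f a1 b1 * g a2 b2.
Proof.
move=> hL hf hg; rewrite /smul (sum2_single (F := fun i j => f i j * g (a1 + a2 - i)%N (b1 + b2 - j)%N) (i0 := a1) (j0 := b1)) ?addKn ?ltnS ?leq_addr //.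
move=> i j hi hj hne; case: (eqVneq (f i j * g (a1 + a2 - i)%N (b1 + b2 - j)%N) 0) => // .
rewrite mulf_eq0 negb_or => /andP [fn gn].
have [] := Kin_split hL (hf _ _ fn) (hg _ _ gn); rewrite ?subnKC // -?ltnS //.
by move=> e1 e2; move: hne; rewrite e1 e2 !eqxx.
Qed.

Lemma sone_supp {R : realType} (L1 L2 : R) : suppK L1 L2 (sone R) 0 0.
Proof.
move=> x y; rewrite /sone.
have [/andP [/eqP -> /eqP ->]|h] := boolP ((x == 0%N) && (y == 0%N)).
  by move=> _; apply: Kin_refl.
move: h; case: (x == 0%N); case: (y == 0%N) => //= _; by rewrite ?mulr0n eqxx.
Qed.

Lemma spow_supp {R : realType} (L1 L2 : R) (f : series R) a b n :
  suppK L1 L2 f a b -> suppK L1 L2 (spow f n) (n * a)%N (n * b)%N.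
Proof.
move=> hf; elim: n => [|n IH]; first by rewrite ?mul0n; apply: sone_supp.
change (spow f n.+1) with (smul f (spow f n)).
by rewrite !mulSn; apply: smul_supp.
Qed.

Lemma spow_corner {R : realType} (L1 L2 : R) (f : series R) a b n :
  L1 != L2 -> suppK L1 L2 f a b -> spow f n (n * a)%N (n * b)%N = f a b ^+ n.
Proof.
move=> hL hf; elim: n => [|n IH]; first by rewrite ?mul0n /= /sone !eqxx.
change (spow f n.+1) with (smul f (spow f n)).
by rewrite !mulSn (smul_corner hL hf (spow_supp (n:=n) hf)) IH exprS.
Qed.

Lemma term_supp {R : realType} (L1 L2 : R) (P Q : series R) a1 b1 a2 b2 i j :
  suppK L1 L2 P a1 b1 -> suppK L1 L2 Q a2 b2 ->
  suppK L1 L2 (smul (spow P i) (spow Q j)) (i * a1 + j * a2)%N (i * b1 + j * b2)%N.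
Proof. by move=> hP hQ; apply: smul_supp; apply: spow_supp. Qed.

Lemma term_corner {R : realType} (L1 L2 : R) (P Q : series R) a1 b1 a2 b2 i j :
  L1 != L2 -> suppK L1 L2 P a1 b1 -> suppK L1 L2 Q a2 b2 ->
  smul (spow P i) (spow Q j) (i * a1 + j * a2)%N (i * b1 + j * b2)%N
  = P a1 b1 ^+ i * Q a2 b2 ^+ j.
Proof.
move=> hL hP hQ; rewrite (smul_corner hL (spow_supp (n:=i) hP) (spow_supp (n:=j) hQ)).
by rewrite (spow_corner _ hL hP) (spow_corner _ hL hQ).
Qed.

Lemma NP_lb {R : realType} (g : series R) (L W : R) (x : R * R) :
  0 <= L -> (forall i j, g i j != 0 -> W <= psi L i j) ->
  newton_polygon g x -> W <= x.1 + L * x.2.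
Proof.
move=> hL hW [n [pts [lam [hq [hl [hs ->]]]]]] /=.
have -> : \sum_(k < n) lam k * (pts k).1 + L * \sum_(k < n) lam k * (pts k).2
          = \sum_(k < n) lam k * ((pts k).1 + L * (pts k).2).
  rewrite mulr_sumr -big_split; apply: eq_bigr => k _ /=; ring.
rewrite -[W]mul1r -hs mulr_suml; apply: ler_sum => k _.
apply: ler_wpM2l; first exact: hl.
have [i [j [gn [hi hj]]]] := hq k.
apply: (le_trans (hW _ _ gn)); rewrite /psi; apply: lerD => //.
exact: ler_wpM2l.
Qed.

Lemma NP_eq {R : realType} (g : series R) (L W M2 : R) (x : R * R) :
  0 <= L -> (forall i j, g i j != 0 -> W <= psi L i j) ->
  (forall i j, g i j != 0 -> psi L i j = W -> M2 <= j%:R) ->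
  newton_polygon g x -> x.1 + L * x.2 = W -> M2 <= x.2.
Proof.
move=> hL hW hM [n [pts [lam [hq [hl [hs ->]]]]]] /= hx.
have pos : forall k : 'I_n, true -> 0 <= lam k * ((pts k).1 + L * (pts k).2 - W).
  move=> k _; apply: mulr_ge0; first exact: hl.
  have [i [j [gn [hi hj]]]] := hq k; rewrite subr_ge0.
  apply: (le_trans (hW _ _ gn)); rewrite /psi; apply: lerD => //.
  exact: ler_wpM2l.
have s0 : \sum_(k < n) lam k * ((pts k).1 + L * (pts k).2 - W) = 0.
  transitivity ((\sum_(k < n) lam k * (pts k).1 + L * \sum_(k < n) lam k * (pts k).2)
                 - W * \sum_(k < n) lam k).
    rewrite !mulr_sumr -!big_split -sumrN -big_split /=; apply: eq_bigr => k _ /=; ring.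
  by rewrite hx hs mulr1 subrr.
have z := psumr_eq0P pos s0.
rewrite -subr_ge0.
have -> : \sum_(k < n) lam k * (pts k).2 - M2 = \sum_(k < n) lam k * ((pts k).2 - M2).
  transitivity (\sum_(k < n) lam k * (pts k).2 - M2 * \sum_(k < n) lam k).
    by rewrite hs mulr1.
  rewrite mulr_sumr -sumrN -big_split /=; apply: eq_bigr => k _ /=; ring.
apply: sumr_ge0 => k _.
have := z k isT; move/eqP; rewrite mulf_eq0 => /orP [/eqP ->|]; first by rewrite mul0r.
rewrite subr_eq0 => /eqP he.
apply: mulr_ge0; first exact: hl.
have [i [j [gn [hi hj]]]] := hq k; rewrite subr_ge0.
have hp : psi L i j = W.
  apply/le_anti; rewrite hW // andbT -he /psi; apply: lerD => //.
  exact: ler_wpM2l.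
exact: le_trans (hM _ _ gn hp) hj.
Qed.

Lemma NP_single {R : realType} (g : series R) i j :
  g i j != 0 -> newton_polygon g (i%:R, j%:R).
Proof.
move=> gn; exists 1%N, (fun _ => (i%:R, j%:R)), (fun _ => 1).
split; first by move=> k; exists i, j; split => //=.
split; first by move=> k; exact: ler01.
by rewrite !big_ord1 !mul1r.
Qed.

Lemma NP_shift {R : realType} (g : series R) (x : R * R) (e : R) :
  0 <= e -> newton_polygon g x -> newton_polygon g (x.1, x.2 + e).
Proof.
move=> he [n [pts [lam [hq [hl [hs ->]]]]]].
exists n, (fun k => ((pts k).1, (pts k).2 + e)), lam.
split.
  move=> k; have [i [j [gn [hi hj]]]] := hq k; exists i, j; split => //=; split => //.
  by rewrite -[j%:R]addr0; apply: lerD.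
split => //; split => //=.
congr (_, _).
transitivity (\sum_(k < n) lam k * (pts k).2 + e * \sum_(k < n) lam k).
  by rewrite hs mulr1.
rewrite mulr_sumr -big_split /=; apply: eq_bigr => k _ /=; ring.
Qed.

Lemma conv0 {R : realType} (t X Y : R) :
  0 < t < 1 -> 0 <= X -> 0 <= Y -> t * X + (1 - t) * Y = 0 -> X = 0 /\ Y = 0.
Proof.
move=> /andP [t0 t1] hX hY h.
have h1 : 0 <= t * X by apply: mulr_ge0 => //; exact: ltW.
have h2 : 0 <= (1 - t) * Y by apply: mulr_ge0 => //; rewrite subr_ge0 ltW.
have e1 : t * X = 0 by apply/le_anti; rewrite h1 andbT -h lerDl.
have e2 : (1 - t) * Y = 0 by move: h; rewrite e1 add0r.
split.
  by move/eqP: e1; rewrite mulf_eq0 (gt_eqF t0) => /eqP.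
by move/eqP: e2; rewrite mulf_eq0 subr_eq0 (gt_eqF t1) => /eqP.
Qed.

Lemma seq_min {T : eqType} {R : realType} (f : T -> R) (s : seq T) :
  s != [::] -> exists2 x, x \in s & forall y, y \in s -> f x <= f y.
Proof.
elim: s => [//|a s IH] _.
case: (eqVneq s [::]) => [->|/IH [x xs hx]].
  exists a; first by rewrite mem_seq1.
  by move=> y; rewrite mem_seq1 => /eqP ->.
case: (leP (f a) (f x)) => h.
  exists a; first by rewrite mem_head.
  move=> y; rewrite in_cons => /orP [/eqP ->//|ys]; exact: le_trans h (hx _ ys).
exists x; first by rewrite in_cons xs orbT.
move=> y; rewrite in_cons => /orP [/eqP ->|ys]; [exact: ltW | exact: hx].
Qed.

Lemma qmin {R : realType} (g : series R) (L : R) : 0 < L -> (exists i j, g i j != 0) ->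
  exists i0 j0, [/\ g i0 j0 != 0,
    (forall i j, g i j != 0 -> psi L i0 j0 <= psi L i j) &
    (forall i j, g i j != 0 -> psi L i j = psi L i0 j0 -> (j0 <= j)%N)].
Proof.
move=> L0 [a [b gab]].
pose W0 := psi L a b.
have W0ge : 0 <= W0 by rewrite /W0 /psi; apply: addr_ge0 => //; apply: mulr_ge0 => //; exact: ltW.
pose N := (a + b + Num.bound W0 + Num.bound (W0 / L)).+1.
have hN1 : W0 < N%:R.
  apply: (lt_le_trans (archi_boundP W0ge)); rewrite ler_nat /N; lia.
have hN2 : W0 < L * N%:R.
  have h := archi_boundP (divr_ge0 W0ge (ltW L0)).
  have : W0 / L < N%:R.
    apply: (lt_le_trans h); rewrite ler_nat /N; apply: leqW; exact: leq_addl.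
  by rewrite ltr_pdivrMr // mulrC.
have out : forall i j, ~~ ((i < N) && (j < N))%N -> W0 < psi L i j.
  move=> i j; rewrite negb_and -!leqNgt => /orP [hi|hj]; rewrite /psi.
    apply: (lt_le_trans hN1); rewrite -[N%:R]addr0; apply: lerD; first by rewrite ler_nat.
    by apply: mulr_ge0; [exact: ltW|].
  apply: (lt_le_trans hN2); rewrite -[L * N%:R]add0r; apply: lerD => //.
  by apply: ler_wpM2l; [exact: ltW|rewrite ler_nat].
pose box := [seq (i, j) | i <- iota 0 N, j <- iota 0 N].
pose s := [seq t <- box | g t.1 t.2 != 0].
have mem : forall i j, g i j != 0 -> (i < N)%N -> (j < N)%N -> (i, j) \in s.
  move=> i j gn hi hj; rewrite mem_filter /= gn /=; apply/allpairsP.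
  by exists (i, j); rewrite !mem_iota /=.
have abN : ((a < N) && (b < N))%N by rewrite /N; apply/andP; split; lia.
have abs : (a, b) \in s by apply: mem => //; case/andP: abN.
have [m ms hm] : exists2 m, m \in s & forall y, y \in s -> psi L m.1 m.2 <= psi L y.1 y.2.
  by apply: (seq_min (fun t => psi L t.1 t.2)); case: (s) abs.
pose s2 := [seq t <- s | psi L t.1 t.2 == psi L m.1 m.2].
have ms2 : m \in s2 by rewrite mem_filter ms eqxx.
have [m2 m2s hm2] : exists2 m2, m2 \in s2 & forall y, y \in s2 -> (m2.2%:R : R) <= (y.2)%:R.
  by apply: (seq_min (fun t => (t.2)%:R : R)); case: (s2) ms2.
move: m2s; rewrite mem_filter => /andP [/eqP em2 m2s].
move: (m2s); rewrite mem_filter => /andP [gm2 _].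
have low : forall i j, g i j != 0 -> psi L m.1 m.2 <= psi L i j.
  move=> i j gn; case: (boolP ((i < N) && (j < N))%N) => [/andP [hi hj]|hb].
    exact: (hm (i, j) (mem _ _ gn hi hj)).
  apply: ltW; apply: (le_lt_trans (hm _ abs)); exact: out.
exists m2.1, m2.2; split => //.
  by move=> i j gn; rewrite em2; apply: low.
move=> i j gn e.
case: (boolP ((i < N) && (j < N))%N) => [/andP [hi hj]|hb].
  have : (i, j) \in s2 by rewrite mem_filter /= e em2 eqxx mem.
  by move/hm2; rewrite ler_nat.
have := out _ _ hb; rewrite e em2 => h.
have := hm _ abs; rewrite -/W0 => h'.
by have := lt_le_trans h h'; rewrite ltxx.
Qed.

Lemma min_vertex {R : realType} (g : series R) (L : R) i0 j0 : 0 < L ->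
  g i0 j0 != 0 ->
  (forall i j, g i j != 0 -> psi L i0 j0 <= psi L i j) ->
  (forall i j, g i j != 0 -> psi L i j = psi L i0 j0 -> (j0 <= j)%N) ->
  is_vertex g (i0%:R, j0%:R).
Proof.
move=> L0 gn hlow hmin; split; first exact: NP_single.
move=> a b t ha hb ht [e1 e2].
have L0' : 0 <= L by exact: ltW.
have hA := NP_lb L0' hlow ha; have hB := NP_lb L0' hlow hb.
have [z1 z2] : (a.1 + L * a.2) - psi L i0 j0 = 0 /\ (b.1 + L * b.2) - psi L i0 j0 = 0.
  apply: conv0 ht _ _ _; rewrite ?subr_ge0 //.
  rewrite /psi e1 e2; ring.
have hM : forall i j, g i j != 0 -> psi L i j = psi L i0 j0 -> j0%:R <= (j%:R : R).
  move=> i j gi e; rewrite ler_nat; exact: (hmin _ _ gi e).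
have ja : j0%:R <= a.2 by apply: (NP_eq L0' hlow hM ha); apply/eqP; rewrite -subr_eq0 z1.
have jb : j0%:R <= b.2 by apply: (NP_eq L0' hlow hM hb); apply/eqP; rewrite -subr_eq0 z2.
have [y1 y2] : a.2 - j0%:R = 0 /\ b.2 - j0%:R = 0.
  apply: conv0 ht _ _ _; rewrite ?subr_ge0 //.
  rewrite e2; ring.
move/eqP: y1; rewrite subr_eq0 => /eqP y1.
move/eqP: y2; rewrite subr_eq0 => /eqP y2.
have x1 : a.1 = i0%:R.
  move: z1; rewrite /psi y1 => /eqP; rewrite subr_eq0 => /eqP /(congr1 (fun t => t - L * j0%:R)).
  by rewrite !addrK.
have x2 : b.1 = i0%:R.
  move: z2; rewrite /psi y2 => /eqP; rewrite subr_eq0 => /eqP /(congr1 (fun t => t - L * j0%:R)).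
  by rewrite !addrK.
by rewrite [a]surjective_pairing [b]surjective_pairing x1 x2 y1 y2.
Qed.

Lemma frac_lt {R : realType} (a b c d : R) : 0 < b -> 0 < d -> a * d < c * b -> a / b < c / d.
Proof.
move=> b0 d0 h; rewrite ltr_pdivrMr // mulrAC ltr_pdivlMr //.
Qed.


Definition sl {R : realType} (nv mv : nat -> nat) (j : nat) : R :=
  ((nv j.+1 - nv j)%N)%:R / ((mv j - mv j.+1)%N)%:R.

Lemma convex_step {R : realType} (q : series R) (nv mv : nat -> nat) (s j : nat) :
  (forall j, (1 <= j < s)%N -> (nv j < nv j.+1)%N /\ (mv j.+1 < mv j)%N) ->
  (forall j, (1 <= j <= s)%N -> is_vertex q ((nv j)%:R, (mv j)%:R)) ->
  (1 <= j)%N -> (j.+2 <= s)%N ->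
  ((nv j.+1 - nv j)%N)%:R * ((mv j.+1 - mv j.+2)%N)%:R
    < ((nv j.+2 - nv j.+1)%N)%:R * ((mv j - mv j.+1)%N)%:R :> R.
Proof.
move=> Ho Hv j1 js.
have [a1 b1] := Ho j (ltac:(apply/andP; split; lia)).
have [a2 b2] := Ho j.+1 (ltac:(apply/andP; split; lia)).
rewrite !natrB; try lia.
set x0 : R := (nv j)%:R; set x1 : R := (nv j.+1)%:R; set x2 : R := (nv j.+2)%:R.
set y0 : R := (mv j)%:R; set y1 : R := (mv j.+1)%:R; set y2 : R := (mv j.+2)%:R.
have hx01 : x0 < x1 by rewrite ltr_nat.
have hx12 : x1 < x2 by rewrite ltr_nat.
rewrite ltNge; apply/negP => h.
pose t := (x2 - x1) / (x2 - x0).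
have d0 : 0 < x2 - x0 by rewrite subr_gt0; exact: lt_trans hx01 hx12.
have ht : t * (x2 - x0) = x2 - x1 by rewrite /t divfK // gt_eqF.
pose e := y1 - (t * y0 + (1 - t) * y2).
have e0 : 0 <= e.
  have : e * (x2 - x0) = (x1 - x0) * (y1 - y2) - (x2 - x1) * (y0 - y1).
    have hx1 : x1 = x2 - t * (x2 - x0) by rewrite ht; ring.
    rewrite /e hx1; ring.
  move=> he; have : 0 <= e * (x2 - x0) by rewrite he subr_ge0.
  by rewrite pmulr_lge0.
have t0 : 0 < t < 1.
  apply/andP; split; first by rewrite /t divr_gt0 // subr_gt0.
  by rewrite /t ltr_pdivrMr // mul1r ltrD2l ltrN2.
have H1 : newton_polygon q (x0, y0 + e).
  by apply: (NP_shift (x := (x0, y0))) => //; exact: (proj1 (Hv j (ltac:(apply/andP; split; lia)))).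
have H2 : newton_polygon q (x2, y2 + e).
  by apply: (NP_shift (x := (x2, y2))) => //; exact: (proj1 (Hv j.+2 (ltac:(apply/andP; split; lia)))).
have H4 : (x1, y1) = (t * (x0, y0 + e).1 + (1 - t) * (x2, y2 + e).1,
                      t * (x0, y0 + e).2 + (1 - t) * (x2, y2 + e).2).
  rewrite /=; congr (_, _).
    have : t * x0 + (1 - t) * x2 = x2 - t * (x2 - x0) by ring.
    by rewrite ht => ->; ring.
  rewrite /e; ring.
have [ha _] := proj2 (Hv j.+1 (ltac:(apply/andP; split; lia))) _ _ t H1 H2 t0 H4.
case: ha => hx _; move: hx01; rewrite hx ltxx //.
Qed.

Lemma sl_pos {R : realType} (nv mv : nat -> nat) (s j : nat) :
  (forall j, (1 <= j < s)%N -> (nv j < nv j.+1)%N /\ (mv j.+1 < mv j)%N) ->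
  (1 <= j < s)%N -> 0 < sl nv mv j :> R.
Proof.
move=> Ho hj; have [h1 h2] := Ho j hj.
by rewrite /sl divr_gt0 // ltr0n subn_gt0.
Qed.

Lemma sl_lt {R : realType} (q : series R) (nv mv : nat -> nat) (s j : nat) :
  (forall j, (1 <= j < s)%N -> (nv j < nv j.+1)%N /\ (mv j.+1 < mv j)%N) ->
  (forall j, (1 <= j <= s)%N -> is_vertex q ((nv j)%:R, (mv j)%:R)) ->
  (1 <= j)%N -> (j.+2 <= s)%N -> sl nv mv j < sl nv mv j.+1 :> R.
Proof.
move=> Ho Hv j1 js.
have [h1 h2] := Ho j (ltac:(apply/andP; split; lia)).
have [h3 h4] := Ho j.+1 (ltac:(apply/andP; split; lia)).
apply: frac_lt; rewrite ?ltr0n ?subn_gt0 //.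
exact: (convex_step Ho Hv).
Qed.

Lemma sl_le {R : realType} (q : series R) (nv mv : nat -> nat) (s a : nat) :
  (forall j, (1 <= j < s)%N -> (nv j < nv j.+1)%N /\ (mv j.+1 < mv j)%N) ->
  (forall j, (1 <= j <= s)%N -> is_vertex q ((nv j)%:R, (mv j)%:R)) ->
  (1 <= a)%N -> forall d, (a + d < s)%N -> sl nv mv a <= sl nv mv (a + d)%N :> R.
Proof.
move=> Ho Hv a1; elim=> [|d IH] h; first by rewrite addn0.
apply: (le_trans (IH (ltac:(lia)))); rewrite addnS; apply: ltW.
apply: (sl_lt Ho Hv); lia.
Qed.

Lemma phi_step {R : realType} (nv mv : nat -> nat) (s j : nat) (L : R) :
  (forall j, (1 <= j < s)%N -> (nv j < nv j.+1)%N /\ (mv j.+1 < mv j)%N) ->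
  (1 <= j < s)%N ->
  psi L (nv j.+1) (mv j.+1) - psi L (nv j) (mv j)
    = ((mv j - mv j.+1)%N)%:R * (sl nv mv j - L).
Proof.
move=> Ho hj; have [h1 h2] := Ho j hj.
have hm : ((mv j - mv j.+1)%N)%:R != 0 :> R by rewrite pnatr_eq0 -lt0n subn_gt0.
rewrite /sl mulrBr mulrC divfK // !natrB; try lia.
rewrite /psi; ring.
Qed.

Lemma vcmp {R : realType} (q : series R) (nv mv : nat -> nat) (s k : nat) (L : R) :
  (forall j, (1 <= j < s)%N -> (nv j < nv j.+1)%N /\ (mv j.+1 < mv j)%N) ->
  (forall j, (1 <= j <= s)%N -> is_vertex q ((nv j)%:R, (mv j)%:R)) ->
  (2 <= k)%N -> (k < s)%N ->
  sl nv mv k.-1 <= L <= sl nv mv k ->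
  forall j, (1 <= j <= s)%N ->
    psi L (nv k) (mv k) <= psi L (nv j) (mv j)
    /\ (sl nv mv k.-1 < L < sl nv mv k -> j != k ->
        psi L (nv k) (mv k) < psi L (nv j) (mv j)).
Proof.
move=> Ho Hv k2 ks /andP [hL1 hL2] j /andP [j1 js].
have up : forall i, (k <= i)%N -> (i < s)%N ->
    psi L (nv i) (mv i) <= psi L (nv i.+1) (mv i.+1) /\
    (L < sl nv mv k -> psi L (nv i) (mv i) < psi L (nv i.+1) (mv i.+1)).
  move=> i ki is_.
  have hst := phi_step L Ho (ltac:(apply/andP; split; lia) : (1 <= i < s)%N).
  have [h1 h2] := Ho i (ltac:(apply/andP; split; lia)).
  have dm : 0 < ((mv i - mv i.+1)%N)%:R :> R by rewrite ltr0n subn_gt0.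
  have ski : sl nv mv k <= sl nv mv i :> R.
    have := sl_le Ho Hv (ltac:(lia) : (1 <= k)%N) (d := (i - k)%N) (ltac:(lia)).
    by rewrite subnKC.
  split.
    rewrite -subr_ge0 hst; apply: mulr_ge0; first exact: ltW.
    by rewrite subr_ge0; exact: le_trans hL2 ski.
  move=> hl; rewrite -subr_gt0 hst; apply: mulr_gt0 => //.
  by rewrite subr_gt0; exact: lt_le_trans hl ski.
have down : forall i, (1 <= i)%N -> (i < k)%N ->
    psi L (nv i.+1) (mv i.+1) <= psi L (nv i) (mv i) /\
    (sl nv mv k.-1 < L -> psi L (nv i.+1) (mv i.+1) < psi L (nv i) (mv i)).
  move=> i i1 ik.
  have hst := phi_step L Ho (ltac:(apply/andP; split; lia) : (1 <= i < s)%N).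
  have [h1 h2] := Ho i (ltac:(apply/andP; split; lia)).
  have dm : 0 < ((mv i - mv i.+1)%N)%:R :> R by rewrite ltr0n subn_gt0.
  have ski : sl nv mv i <= sl nv mv k.-1 :> R.
    have := sl_le Ho Hv i1 (d := (k.-1 - i)%N) (ltac:(lia)).
    by rewrite subnKC //; lia.
  split.
    rewrite -subr_ge0 -opprB hst oppr_ge0; apply: mulr_ge0_le0; first exact: ltW.
    by rewrite subr_le0; exact: le_trans ski hL1.
  move=> hl; rewrite -subr_gt0 -opprB hst oppr_gt0 pmulr_rlt0 //.
  by rewrite subr_lt0; exact: le_lt_trans ski hl.
have upchain : forall d, (k + d <= s)%N ->
    psi L (nv k) (mv k) <= psi L (nv (k + d)%N) (mv (k + d)%N).
  elim=> [|d IH] h; first by rewrite addn0.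
  apply: (le_trans (IH (ltac:(lia)))); rewrite addnS; apply: (proj1 (up _ _ _)); lia.
have downchain : forall d, (d < k)%N ->
    psi L (nv k) (mv k) <= psi L (nv (k - d)%N) (mv (k - d)%N).
  elim=> [|d IH] h; first by rewrite subn0.
  apply: (le_trans (IH (ltac:(lia)))).
  have e : (k - d = (k - d.+1).+1)%N by lia.
  rewrite e; apply: (proj1 (down _ _ _)); lia.
have le_all : forall j, (1 <= j <= s)%N -> psi L (nv k) (mv k) <= psi L (nv j) (mv j).
  move=> i /andP [i1 is_].
  case: (leqP k i) => ki.
    by have := upchain (i - k)%N (ltac:(lia)); rewrite subnKC.
  by have := downchain (k - i)%N (ltac:(lia)); rewrite subKn //; lia.
split; first by apply: le_all; rewrite j1 js.
move=> /andP [l1 l2] jk.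
case: (ltngtP k j) => kj; last by rewrite kj eqxx in jk.
  have e : j = (j.-1).+1 by lia.
  rewrite e; apply: (le_lt_trans (le_all j.-1 (ltac:(apply/andP; split; lia)))).
  by apply: (proj2 (up _ _ _)) => //; lia.
apply: (le_lt_trans (le_all j.+1 (ltac:(apply/andP; split; lia)))).
by apply: (proj2 (down _ _ _)) => //; lia.
Qed.

Lemma qvert {R : realType} (q : series R) (nv mv : nat -> nat) (s k : nat) (L : R) :
  (forall j, (1 <= j < s)%N -> (nv j < nv j.+1)%N /\ (mv j.+1 < mv j)%N) ->
  (forall j, (1 <= j <= s)%N -> is_vertex q ((nv j)%:R, (mv j)%:R)) ->
  (forall v, is_vertex q v -> exists2 j, (1 <= j <= s)%N & v = ((nv j)%:R, (mv j)%:R)) ->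
  (exists i j, q i j != 0) -> (2 <= k)%N -> (k < s)%N ->
  sl nv mv k.-1 <= L <= sl nv mv k ->
  exists j', [/\ (1 <= j' <= s)%N, q (nv j') (mv j') != 0 &
    forall i j, q i j != 0 -> psi L (nv j') (mv j') <= psi L i j].
Proof.
move=> Ho Hv Hall qn k2 ks /andP [hL1 hL2].
have L0 : 0 < L.
  apply: lt_le_trans hL1; apply: (sl_pos Ho); apply/andP; split; lia.
have [i0 [j0 [gn hlow hmin]]] := qmin L0 qn.
have [j' hj' e] := Hall _ (min_vertex L0 gn hlow hmin).
case: e => /natr_inj e1 /natr_inj e2.
by exists j'; split => //; rewrite -e1 -e2.
Qed.

Lemma qlow {R : realType} (q : series R) (nv mv : nat -> nat) (s k : nat) (L : R) :
  (forall j, (1 <= j < s)%N -> (nv j < nv j.+1)%N /\ (mv j.+1 < mv j)%N) ->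
  (forall j, (1 <= j <= s)%N -> is_vertex q ((nv j)%:R, (mv j)%:R)) ->
  (forall v, is_vertex q v -> exists2 j, (1 <= j <= s)%N & v = ((nv j)%:R, (mv j)%:R)) ->
  (exists i j, q i j != 0) -> (2 <= k)%N -> (k < s)%N ->
  sl nv mv k.-1 <= L <= sl nv mv k ->
  forall i j, q i j != 0 -> psi L (nv k) (mv k) <= psi L i j.
Proof.
move=> Ho Hv Hall qn k2 ks hL i j gn.
have [j' [hj' _ hlow]] := qvert Ho Hv Hall qn k2 ks hL.
apply: le_trans (hlow _ _ gn).
exact: (proj1 (vcmp Ho Hv k2 ks hL hj')).
Qed.

Lemma qcorner {R : realType} (q : series R) (nv mv : nat -> nat) (s k : nat) :
  (forall j, (1 <= j < s)%N -> (nv j < nv j.+1)%N /\ (mv j.+1 < mv j)%N) ->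
  (forall j, (1 <= j <= s)%N -> is_vertex q ((nv j)%:R, (mv j)%:R)) ->
  (forall v, is_vertex q v -> exists2 j, (1 <= j <= s)%N & v = ((nv j)%:R, (mv j)%:R)) ->
  (exists i j, q i j != 0) -> (2 <= k)%N -> (k < s)%N ->
  q (nv k) (mv k) != 0.
Proof.
move=> Ho Hv Hall qn k2 ks.
have hlt : sl nv mv k.-1 < sl nv mv k :> R.
  have := sl_lt Ho Hv (j := k.-1) (ltac:(lia)) (ltac:(lia)).
  by rewrite prednK //; lia.
pose L : R := (sl nv mv k.-1 + sl nv mv k) / 2.
have hL1 : sl nv mv k.-1 < L by rewrite /L; lra.
have hL2 : L < sl nv mv k by rewrite /L; lra.
have hL : sl nv mv k.-1 <= L <= sl nv mv k by rewrite !ltW.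
have [j' [hj' gn hlow]] := qvert Ho Hv Hall qn k2 ks hL.
case: (eqVneq j' k) => [<-//|jk].
have L0 : 0 <= L.
  apply: le_trans (ltW hL1); apply: ltW; apply: (sl_pos Ho); apply/andP; split; lia.
have h1 := NP_lb L0 hlow (proj1 (Hv k (ltac:(apply/andP; split; lia)))).
have h2 := proj2 (vcmp Ho Hv k2 ks hL hj') (ltac:(by rewrite hL1 hL2)) jk.
by move: h1; rewrite /= -/(psi L (nv k) (mv k)) leNgt h2.
Qed.

Definition Gam (g de d n : nat) : nat := (g * \sum_(i < n) de ^ (n.-1 - i) * d ^ i)%N.

Lemma Gam0 g de d : Gam g de d 0 = 0%N.
Proof. by rewrite /Gam big_ord0 muln0. Qed.

Lemma GamS g de d n : Gam g de d n.+1 = (g * de ^ n + d * Gam g de d n)%N.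
Proof.
rewrite /Gam big_ord_recl /= subn0 expn0 muln1 mulnDr; congr (_ + _)%N.
rewrite !big_distrr /=; apply: eq_bigr => i _.
rewrite /bump leq0n add1n expnS.
have -> : (n - i.+1 = n.-1 - i)%N by lia.
ring.
Qed.

Lemma psi_scale {R : realType} (L : R) (D G E i j : nat) : (0 < D)%N ->
  psi L (i * D + j * G)%N (j * E)%N = D%:R * psi ((G%:R + L * E%:R) / D%:R) i j.
Proof.
move=> D0; have hD : (D%:R : R) != 0 by rewrite pnatr_eq0 -lt0n.
rewrite /psi !natrD !natrM; field; exact: hD.
Qed.

Lemma Kin_x0 {R : realType} (L1 L2 : R) a b : (a <= b)%N -> Kin L1 L2 b 0 a 0.
Proof. by move=> h; rewrite /Kin /psi !mulr0 !addr0 ler_nat h. Qed.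

Lemma gam_bounds {R : realType} (L1 L2 : R) (g de d : nat) :
  0 <= L1 -> (de%:R - d%:R) * L1 <= g%:R -> g%:R <= (de%:R - d%:R) * L2 ->
  forall n (L : R), L1 <= L <= L2 ->
  L1 * (de ^ n)%N%:R <= (Gam g de d n)%:R + L * (d ^ n)%N%:R <= L2 * (de ^ n)%N%:R.
Proof.
move=> L10 hlo hhi; elim=> [|n IH] L hL.
  by rewrite Gam0 !expn0 add0r !mulr1.
have [i1 i2] := andP (IH L hL).
set A : R := (de ^ n)%N%:R; set X : R := (Gam g de d n)%:R + L * (d ^ n)%N%:R.
have A0 : 0 <= A by rewrite /A ler0n.
have d0 : 0 <= (d%:R : R) by rewrite ler0n.
have e : (Gam g de d n.+1)%:R + L * (d ^ n.+1)%N%:R = g%:R * A + d%:R * X.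
  rewrite GamS expnS natrD (natrM _ g) (natrM _ d (Gam _ _ _ _)) (natrM _ d (d ^ n)) /A /X; ring.
rewrite e expnS natrM -/A.
have h1 := ler_wpM2l d0 i1; have h2 := ler_wpM2l d0 i2.
have h3 := ler_wpM2r A0 hlo; have h4 := ler_wpM2r A0 hhi.
apply/andP; split.
  have -> : L1 * (de%:R * A) = (de%:R - d%:R) * L1 * A + d%:R * (L1 * A) by ring.
  by apply: lerD.
have -> : L2 * (de%:R * A) = (de%:R - d%:R) * L2 * A + d%:R * (L2 * A) by ring.
by apply: lerD.
Qed.

Lemma skew_inv {R : realType} (p : nat -> R[i]) (q : series R) (L1 L2 : R) (de g d : nat) :
  L1 != L2 -> 0 < L1 -> L1 <= L2 -> (1 <= de)%N ->
  (forall i, (i < de)%N -> p i = 0) -> p de != 0 -> (1 <= d)%N ->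
  (forall L, L1 <= L <= L2 -> forall i j, q i j != 0 -> psi L g d <= psi L i j) ->
  q g d != 0 ->
  (forall n (L : R), L1 <= L <= L2 ->
     L1 * (de ^ n)%N%:R <= (Gam g de d n)%:R + L * (d ^ n)%N%:R <= L2 * (de ^ n)%N%:R) ->
  forall n, [/\ suppK L1 L2 (skew_iter p q n).1 (de ^ n)%N 0,
      (skew_iter p q n).1 (de ^ n)%N 0 != 0,
      suppK L1 L2 (skew_iter p q n).2 (Gam g de d n) (d ^ n)%N &
      (skew_iter p q n).2 (Gam g de d n) (d ^ n)%N != 0].
Proof.
move=> hL L10 L12 de1 plow pde d1 qK qc bnd.
elim=> [|n [hP cP hQ cQ]].
  rewrite /= Gam0 !expn0; split.
  - move=> x y; rewrite /sZ.
    have [/andP [/eqP -> /eqP ->]|h] := boolP ((x == 1%N) && (y == 0%N)).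
      by move=> _; apply: Kin_refl.
    by move: h; case: (x == 1%N); case: (y == 0%N) => //= _; rewrite ?mulr0n eqxx.
  - by rewrite /sZ /= oner_neq0.
  - move=> x y; rewrite /sW.
    have [/andP [/eqP -> /eqP ->]|h] := boolP ((x == 0%N) && (y == 1%N)).
      by move=> _; apply: Kin_refl.
    by move: h; case: (x == 0%N); case: (y == 1%N) => //= _; rewrite ?mulr0n eqxx.
  - by rewrite /sW /= oner_neq0.
have hD : (0 < de ^ n)%N by rewrite expn_gt0 de1.
have hDn : (0 < d ^ n)%N by rewrite expn_gt0 d1.
have hDR : ((de ^ n)%N%:R : R) != 0 by rewrite pnatr_eq0 -lt0n.
set P := (skew_iter p q n).1; set Q := (skew_iter p q n).2.
change (skew_iter p q n.+1) with (scomp (lift1 p) P Q, scomp q P Q); rewrite /=.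
pose Lp (L : R) := ((Gam g de d n)%:R + L * (d ^ n)%N%:R) / (de ^ n)%N%:R.
have hLp : forall L, L1 <= L <= L2 -> L1 <= Lp L <= L2.
  move=> L hl; have /andP [b1 b2] := bnd n L hl.
  have D0 : 0 < ((de ^ n)%N%:R : R) by rewrite ltr0n.
  by rewrite /Lp ler_pdivlMr // ler_pdivrMr // b1 b2.
have eqT : forall L i j, psi L (i * de ^ n + j * Gam g de d n)%N (j * d ^ n)%N
                        = (de ^ n)%N%:R * psi (Lp L) i j.
  by move=> L i j; apply: psi_scale.
have eqG : forall L, psi L (Gam g de d n.+1) (d ^ n.+1)%N = (de ^ n)%N%:R * psi (Lp L) g d.
  by move=> L; rewrite GamS expnS; apply: psi_scale.
have keyK : forall i j, q i j != 0 ->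
    Kin L1 L2 (i * de ^ n + j * Gam g de d n)%N (j * d ^ n)%N (Gam g de d n.+1) (d ^ n.+1)%N.
  have D0 : 0 <= ((de ^ n)%N%:R : R) by rewrite ler0n.
  move=> i j qn; rewrite /Kin !eqT !eqG; split; apply: ler_wpM2l => //; apply: qK => //;
    apply: hLp; rewrite ?lexx ?L12 //.
have hLpne : Lp L1 != Lp L2.
  apply/negP => /eqP; rewrite /Lp => /(congr1 (fun t => t * (de ^ n)%N%:R)).
  rewrite !divfK // => /addrI /(congr1 (fun t => t / (d ^ n)%N%:R)).
  rewrite !mulfK ?pnatr_eq0 -?lt0n // => e; by rewrite e eqxx in hL.
split.
- move=> x y; rewrite /scomp.
  move=> /(@sum2_nz _ _ _ (fun i j => lift1 p i j * smul (spow P i) (spow Q j) x y)).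
  move=> [i [j [hi [hj]]]]; rewrite mulf_eq0 negb_or => /andP [hl ht].
  case: (eqVneq j 0%N) => [j0|jn]; last by move: hl; rewrite /lift1 (negbTE jn) eqxx.
  subst j; move: hl; rewrite /lift1 eqxx => pi.
  have ide : (de <= i)%N.
    by case: (ltnP i de) => // /plow hp; rewrite hp eqxx in pi.
  have := term_supp (i := i) (j := 0) hP hQ ht.
  rewrite muln0 !mul0n !addn0 => hk.
  apply: (Kin_trans hk); apply: Kin_x0; rewrite expnS; exact: leq_mul ide (leqnn _).
- rewrite /scomp (sum2_single (F := fun i j => lift1 p i j * smul (spow P i) (spow Q j) (de ^ n.+1)%N 0) (i0 := de) (j0 := 0)).
  + rewrite /lift1 eqxx.
    have := term_corner de 0%N hL hP hQ.
    rewrite muln0 !mul0n !addn0 -expnS => ->.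
    by rewrite expr0 mulr1 mulf_neq0 // expf_neq0.
  + by rewrite addn0 ltnS expnS leq_pmulr.
  + by [].
  + move=> i j hi hj hne; case: (eqVneq j 0%N) => [j0|jn]; last by rewrite /lift1 (negbTE jn) mul0r.
    subst j; rewrite /lift1 eqxx; move: hne; rewrite eqxx orbF => hne.
    case: (ltnP i de) => [/plow ->|hide]; first by rewrite mul0r.
    have hgt : (de < i)%N by rewrite ltn_neqAle eq_sym hne hide.
    case: (eqVneq (smul (spow P i) (spow Q 0) (de ^ n.+1)%N 0) 0) => [->|hnz]; first by rewrite mulr0.
    exfalso; have := term_supp (i := i) (j := 0) hP hQ hnz.
    rewrite muln0 !mul0n !addn0 => -[k1 _].
    move: k1; rewrite /psi !mulr0 !addr0 ler_nat expnS leq_pmul2r // => hh.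
    by move: (leq_trans hgt hh); rewrite ltnn.
- move=> x y; rewrite /scomp.
  move=> /(@sum2_nz _ _ _ (fun i j => q i j * smul (spow P i) (spow Q j) x y)).
  move=> [i [j [hi [hj]]]]; rewrite mulf_eq0 negb_or => /andP [qn ht].
  have := term_supp (i := i) (j := j) hP hQ ht.
  rewrite muln0 add0n => hk.
  exact: (Kin_trans hk (keyK _ _ qn)).
- rewrite /scomp (sum2_single (F := fun i j => q i j * smul (spow P i) (spow Q j) (Gam g de d n.+1) (d ^ n.+1)%N) (i0 := g) (j0 := d)).
  + have := term_corner g d hL hP hQ.
    rewrite muln0 add0n -GamS -expnS => ->.
    by rewrite mulf_neq0 // mulf_neq0 // expf_neq0.
  + rewrite ltnS GamS; apply: leq_trans (leq_pmulr g hD) _.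
    by rewrite -addnA leq_addr.
  + rewrite ltnS; apply: leq_trans (leq_addl _ _); rewrite expnS.
    exact: leq_pmulr.
  + move=> i j hi hj hne.
    case: (eqVneq (q i j) 0) => [->|qn]; first by rewrite mul0r.
    case: (eqVneq (smul (spow P i) (spow Q j) (Gam g de d n.+1) (d ^ n.+1)%N) 0) => [->|hnz];
      first by rewrite mulr0.
    exfalso; have := term_supp (i := i) (j := j) hP hQ hnz.
    rewrite muln0 add0n => -[k1 k2].
    have [k3 k4] := keyK _ _ qn.
    have e1 : psi (Lp L1) i j = psi (Lp L1) g d.
      apply: (mulfI hDR); rewrite -eqT -eqG; apply/le_anti; by rewrite k1 k3.
    have e2 : psi (Lp L2) i j = psi (Lp L2) g d.
      apply: (mulfI hDR); rewrite -eqT -eqG; apply/le_anti; by rewrite k2 k4.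
    have [ei ej] := Kin_antisym hLpne (x := i) (y := j) (a := g) (b := d)
       (ltac:(by rewrite /Kin e1 e2)) (ltac:(by rewrite /Kin e1 e2)).
    by move: hne; rewrite ei ej !eqxx.
Qed.

Lemma yint_hi {R : realType} (x1 y1 x2 y2 : nat) (de : R) :
  (x1 < x2)%N -> (y2 < y1)%N ->
  y_intercept x1%:R y1%:R x2%:R y2%:R <= de ->
  x1%:R <= (de - y1%:R) * (((x2 - x1)%N)%:R / ((y1 - y2)%N)%:R).
Proof.
move=> hx hy; rewrite /y_intercept !natrB; try lia.
have hA : 0 < (x2%:R - x1%:R : R) by rewrite subr_gt0 ltr_nat.
have hB : 0 < (y1%:R - y2%:R : R) by rewrite subr_gt0 ltr_nat.
set A := (x2%:R - x1%:R : R); set B := (y1%:R - y2%:R : R).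
have -> : y1%:R - x1%:R * (y2%:R - y1%:R) / A = y1%:R + x1%:R * B / A.
  rewrite /B; field; exact: lt0r_neq0.
move=> h.
have h' : x1%:R * B / A <= de - y1%:R by lra.
have -> : (x1%:R : R) = (x1%:R * B / A) * (A / B).
  field; rewrite !lt0r_neq0 //.
by apply: ler_wpM2r h'; apply: divr_ge0; exact: ltW.
Qed.

Lemma yint_lo {R : realType} (x0 y0 x1 y1 : nat) (de : R) :
  (x0 < x1)%N -> (y1 < y0)%N ->
  de <= y_intercept x0%:R y0%:R x1%:R y1%:R ->
  (de - y1%:R) * (((x1 - x0)%N)%:R / ((y0 - y1)%N)%:R) <= x1%:R.
Proof.
move=> hx hy; rewrite /y_intercept !natrB; try lia.
have hX : 0 < (x1%:R - x0%:R : R) by rewrite subr_gt0 ltr_nat.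
have hY : 0 < (y0%:R - y1%:R : R) by rewrite subr_gt0 ltr_nat.
set X := (x1%:R - x0%:R : R); set Y := (y0%:R - y1%:R : R).
have -> : y0%:R - x0%:R * (y1%:R - y0%:R) / X = y1%:R + x1%:R * Y / X.
  rewrite /X /Y; field; rewrite -/X; exact: lt0r_neq0.
move=> h.
have h' : de - y1%:R <= x1%:R * Y / X by lra.
have -> : (x1%:R : R) = (x1%:R * Y / X) * (X / Y).
  field; rewrite !lt0r_neq0 //.
by apply: ler_wpM2r h'; apply: divr_ge0; exact: ltW.
Qed.

Lemma interp {R : realType} (L1 L2 l : R) (a b i j : nat) :
  L1 <= l <= L2 -> Kin L1 L2 i j a b -> a%:R + l * b%:R <= i%:R + l * j%:R.
Proof.
move=> /andP [h1 h2] [k1 k2]; rewrite -subr_ge0.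
have -> : i%:R + l * j%:R - (a%:R + l * b%:R) = (i%:R - a%:R) + l * (j%:R - b%:R) :> R by ring.
case: (leP (b%:R : R) j%:R) => hb.
  apply: le_trans (_ : 0 <= (i%:R - a%:R) + L1 * (j%:R - b%:R)) _.
    by move: k1; rewrite /psi -subr_ge0 => h; apply: le_trans h _; rewrite le_eqVlt; apply/orP; left; apply/eqP; ring.
  by apply: lerD => //; apply: ler_wpM2r => //; rewrite subr_ge0.
apply: le_trans (_ : 0 <= (i%:R - a%:R) + L2 * (j%:R - b%:R)) _.
  by move: k2; rewrite /psi -subr_ge0 => h; apply: le_trans h _; rewrite le_eqVlt; apply/orP; left; apply/eqP; ring.
apply: lerD => //; apply: ler_wnM2r => //; rewrite subr_le0; exact: ltW.
Qed.

Lemma vertex_two {R : realType} (g : series R) (L1 L2 : R) (a b : nat) :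
  L1 != L2 -> 0 <= L1 -> 0 <= L2 -> suppK L1 L2 g a b -> g a b != 0 ->
  is_vertex g (a%:R, b%:R).
Proof.
move=> hL l1 l2 hK gn; split; first exact: NP_single.
move=> u v t hu hv ht e.
have low : forall L, 0 <= L -> (forall i j, g i j != 0 -> psi L a b <= psi L i j) ->
    u.1 + L * u.2 = psi L a b.
  move=> L hL0 hlow.
  have hU := NP_lb hL0 hlow hu; have hV := NP_lb hL0 hlow hv.
  have [z1 _] : (u.1 + L * u.2) - psi L a b = 0 /\ (v.1 + L * v.2) - psi L a b = 0.
    apply: conv0 ht _ _ _; rewrite ?subr_ge0 //.
    case: e => e1 e2; rewrite /psi e1 e2; ring.
  by apply/eqP; rewrite -subr_eq0 z1.
have u1 := low L1 l1 (fun i j h => proj1 (hK i j h)).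
have u2 := low L2 l2 (fun i j h => proj2 (hK i j h)).
have lowv : forall L, 0 <= L -> (forall i j, g i j != 0 -> psi L a b <= psi L i j) ->
    v.1 + L * v.2 = psi L a b.
  move=> L hL0 hlow.
  have hU := NP_lb hL0 hlow hu; have hV := NP_lb hL0 hlow hv.
  have [_ z2] : (u.1 + L * u.2) - psi L a b = 0 /\ (v.1 + L * v.2) - psi L a b = 0.
    apply: conv0 ht _ _ _; rewrite ?subr_ge0 //.
    case: e => e1 e2; rewrite /psi e1 e2; ring.
  by apply/eqP; rewrite -subr_eq0 z2.
have v1 := lowv L1 l1 (fun i j h => proj1 (hK i j h)).
have v2 := lowv L2 l2 (fun i j h => proj2 (hK i j h)).
have sol : forall w : R * R, w.1 + L1 * w.2 = psi L1 a b -> w.1 + L2 * w.2 = psi L2 a b ->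
    w = (a%:R, b%:R).
  move=> [w1 w2] /= h1 h2.
  have ew2 : w2 = b%:R.
    have : (L1 - L2) * (w2 - b%:R) = 0.
      transitivity ((w1 + L1 * w2 - psi L1 a b) - (w1 + L2 * w2 - psi L2 a b)).
        rewrite /psi; ring.
      by rewrite h1 h2 !subrr.
    move/eqP; rewrite mulf_eq0 subr_eq0 (negbTE hL) /= subr_eq0 => /eqP //.
  move: h1; rewrite /psi ew2 => /(congr1 (fun t => t - L1 * b%:R)); rewrite !addrK => ->.
  by [].
by split; apply: sol.
Qed.

Unset Implicit Arguments.
Set Strict Implicit.

Theorem theorem6p1 (R : realType) (p : nat -> R[i]) (q : series R)
    (delta : nat) (s : nat) (nv mv : nat -> nat) (k : nat) :
  (* p(z) = a_delta z^delta + O(z^(delta+1)), a_delta <> 0, delta >= 1, p holomorphic *)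
  (1 <= delta)%N ->
  (forall i, (i < delta)%N -> p i = 0) ->
  p delta != 0 ->
  convergent1 p ->
  (* q holomorphic, q(0,0) = 0, q not identically zero *)
  convergent q ->
  q 0%N 0%N = 0 ->
  (exists i j, q i j != 0) ->
  (* (nv 1, mv 1), ..., (nv s, mv s) are the vertices of N(q) *)
  (forall j, (1 <= j < s)%N -> (nv j < nv j.+1)%N /\ (mv j.+1 < mv j)%N) ->
  (forall j, (1 <= j <= s)%N -> is_vertex q ((nv j)%:R, (mv j)%:R)) ->
  (forall v, is_vertex q v ->
     exists2 j, (1 <= j <= s)%N & v = ((nv j)%:R, (mv j)%:R)) ->
  (* Case 4 *)
  (2 < s)%N ->
  (2 <= k <= s.-1)%N ->
  @y_intercept R (nv k)%:R (mv k)%:R (nv k.+1)%:R (mv k.+1)%:R <= delta%:R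
    <= @y_intercept R (nv k.-1)%:R (mv k.-1)%:R (nv k)%:R (mv k)%:R ->
  let gamma := nv k in
  let d := mv k in
  let l1 : R := ((nv k - nv k.-1)%N)%:R / ((mv k.-1 - mv k)%N)%:R in
  let l1l2 : R := ((nv k.+1 - nv k)%N)%:R / ((mv k - mv k.+1)%N)%:R in
  forall n : nat, (1 <= n)%N ->
    let Qn := (skew_iter p q n).2 in
    let gamma_n := (gamma * \sum_(i < n) delta ^ (n.-1 - i) * d ^ i)%N in
    contains Qn gamma_n (d ^ n) /\
    is_vertex Qn (gamma_n%:R, (d ^ n)%:R) /\
    (forall l : R, l1 <= l <= l1l2 ->
       wl_eq Qn l (gamma_n%:R + l * (d ^ n)%:R) /\
       wl_eq (monomial R gamma_n (d ^ n)) l (gamma_n%:R + l * (d ^ n)%:R)).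
Proof.
move=> de1 plow pde _ _ _ qn Ho Hv Hall s2 /andP [k2 ks1] /andP [hT1 hT2].
move=> gamma d l1 l1l2 n n1 Qn gamma_n.
have ks : (k < s)%N by lia.
have ek : k.-1.+1 = k by lia.
have hl1 : l1 = sl nv mv k.-1 by rewrite /l1 /sl ek.
have hl2 : l1l2 = sl nv mv k by [].
have [o1 o2] := Ho k.-1 (ltac:(apply/andP; split; lia)).
have [o3 o4] := Ho k (ltac:(apply/andP; split; lia)).
rewrite ek in o1 o2.
have L10 : 0 < l1 by rewrite hl1; apply: (sl_pos Ho); apply/andP; split; lia.
have L20 : 0 < l1l2 by rewrite hl2; apply: (sl_pos Ho); apply/andP; split; lia.
have L12 : l1 < l1l2.
  rewrite hl1 hl2; have := sl_lt Ho Hv (j := k.-1) (ltac:(lia)) (ltac:(lia)).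
  by rewrite ek.
have hLne : l1 != l1l2 by rewrite lt_eqF.
have d1 : (1 <= d)%N by rewrite /d; lia.
have hhi : (gamma%:R : R) <= (delta%:R - d%:R) * l1l2.
  exact: (yint_hi (x2 := nv k.+1) (y2 := mv k.+1)).
have hlo : (delta%:R - d%:R) * l1 <= (gamma%:R : R).
  have := yint_lo (x0 := nv k.-1) (y0 := mv k.-1) (x1 := nv k) (y1 := mv k) o1 o2 hT2.
  by [].
have qK : forall L, l1 <= L <= l1l2 -> forall i j, q i j != 0 -> psi L gamma d <= psi L i j.
  move=> L hL i j; apply: (qlow Ho Hv Hall qn k2 ks); by rewrite -hl1 -hl2.
have qc : q gamma d != 0 := qcorner Ho Hv Hall qn k2 ks.
have bnd := gam_bounds (ltW L10) hlo hhi.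
have [_ _ hQ cQ] := skew_inv hLne L10 (ltW L12) de1 plow pde d1 qK qc bnd n.
have eg : gamma_n = Gam gamma delta d n by [].
rewrite eg /Qn; split; first exact: cQ.
split; first exact: (vertex_two hLne (ltW L10) (ltW L20) hQ cQ).
move=> l hl; split.
  split; first by exists (Gam gamma delta d n), (d ^ n)%N; split.
  by move=> i j /hQ hk; apply: (interp hl hk).
split.
  exists (Gam gamma delta d n), (d ^ n)%N; split => //.
  by rewrite /monomial !eqxx /= oner_neq0.
move=> i j; rewrite /monomial.
have [/andP [/eqP -> /eqP ->]|h] := boolP ((i == Gam gamma delta d n) && (j == (d ^ n)%N)).
  by move=> _.
by move: h; case: (_ == _); case: (_ == _) => //= _; rewrite ?mulr0n eqxx.
Qed.
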